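(* Let $p=11$ and let $0\le i\le 9$ with $i\ne5$. Then $F_i(\mathbb{Z}_{11})=(F(i)\bmod 11)+11\mathbb{Z}_{11}$, where $$F_i(x)=\sum_{m\ge0}\frac{\left(\omega(\phi)^i-(-1)^m\omega(\bar\phi)^i\right)\left(\log_{11}\frac{\phi}{\omega(\phi)}\right)^m}{m!\,\sqrt5}\,x^m\quad(x\in\mathbb{Z}_{11}).$$
   Context: $F(n)$ is the Fibonacci sequence ($F(0)=0,F(1)=1,F(n+2)=F(n+1)+F(n)$). Since $11\equiv1\pmod5$, the polynomial $x^2-x-1$ has two roots $\phi,\bar\phi\in\mathbb{Z}_{11}$; $\sqrt5:=2\phi-1$. For $x\in\mathbb{Z}_{11}\setminus11\mathbb{Z}_{11}$, $\omega(x)$ is the unique $10$th root of unity in $\mathbb{Z}_{11}$ congruent to $x$ modulo $11$. $\log_{11}y=\sum_{m\ge1}(-1)^{m+1}(y-1)^m/m$ is the $11$-adic logarithm. $F(i)\bmod 11$ denotes the least nonnegative residue. *)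

(* Defs.v *)
(* The 11-adic numbers are built honestly as the completion of
   Q for the 11-adic absolute value: an element of Q_11 is represented by an
   11-adically Cauchy sequence of rationals, with equality up to null sequences. *)
From mathcomp Require Import all_boot all_order all_algebra.
From Stdlib Require Import ClassicalEpsilon.
Set Implicit Arguments. Unset Strict Implicit. Unset Printing Implicit Defensive.
Import Order.TTheory GRing.Theory Num.Theory.
Local Open Scope ring_scope.

Definition padic := nat -> rat.

Definition vp (q : rat) : int :=
  (logn 11 (absz (numq q)))%:Z - (logn 11 (absz (denq q)))%:Z.

Definition small (k : nat) (q : rat) : bool := (q == 0) || (k%:Z <= vp q).

Definition is_cauchy (x : padic) : Prop :=
  forall k : nat, exists N : nat, forall n m : nat, (N <= n)%N -> (N <= m)%N ->
    small k (x n - x m).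

(* pdvd k x <-> the 11-adic number x lies in 11^k Z_11 *)
Definition pdvd (k : nat) (x : padic) : Prop :=
  exists N : nat, forall n : nat, (N <= n)%N -> small k (x n).

Definition peq (x y : padic) : Prop := forall k : nat, pdvd k (fun n => x n - y n).

Definition inZ11 (x : padic) : Prop := is_cauchy x /\ pdvd 0 x.

Definition pconst (q : rat) : padic := fun _ => q.

Definition pconv (u : nat -> padic) (y : padic) : Prop :=
  forall k : nat, exists M : nat, forall m : nat, (M <= m)%N ->
    pdvd k (fun n => u m n - y n).

(* the 11-adic limit (a chosen representative, when it exists) *)
Definition plim (u : nat -> padic) : padic :=
  epsilon (inhabits (pconst 0)) (fun y => is_cauchy y /\ pconv u y).

Definition omega11 (x : padic) : padic :=
  epsilon (inhabits (pconst 0)) (fun w => is_cauchy w /\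
    peq (fun n => w n ^+ 10) (pconst 1) /\ pdvd 1 (fun n => w n - x n)).

Definition log11 (y : padic) : padic :=
  plim (fun M n => \sum_(1 <= m < M.+1) (-1) ^+ m.+1 * (y n - 1) ^+ m / m%:R).

Fixpoint fib (n : nat) : nat :=
  match n with
  | 0 => 0
  | 1 => 1
  | (k.+1 as n1).+1 => fib n1 + fib k
  end.

(* m-th term of F_i(x); phib = 1 - phi is the other root, sqrt5 = 2 phi - 1 *)
Definition Fi_term (i m : nat) (phi x : padic) : padic :=
  let w := omega11 phi in
  let wb := omega11 (fun n => 1 - phi n) in
  let L := log11 (fun n => phi n / w n) in
  fun n => (w n ^+ i - (-1) ^+ m * wb n ^+ i) * L n ^+ m
           / ((m`!)%:R * (2 * phi n - 1)) * x n ^+ m.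

Definition Fi_partial (i : nat) (phi x : padic) (M : nat) : padic :=
  fun n => \sum_(m < M) Fi_term i m phi x n.

Definition Fi (i : nat) (phi x : padic) : padic := plim (Fi_partial i phi x).

(* Main.v *)
Require Import Defs.
From mathcomp Require Import all_boot all_order all_algebra.
From mathcomp Require Import ring lra zify.
From Stdlib Require Import ClassicalEpsilon.
Import Order.TTheory GRing.Theory Num.Theory.
Local Open Scope ring_scope.
Set Implicit Arguments. Unset Strict Implicit.

Lemma p11 : prime 11. Proof. by []. Qed.

Lemma vp_frac (a b : int) : a != 0 -> b != 0 ->
  vp (a%:~R / b%:~R) = (logn 11 `|a|)%:Z - (logn 11 `|b|)%:Z.
Proof.
move=> a0 b0; set q : rat := _ / _.
have q0 : q != 0 by rewrite /q mulf_neq0 ?invr_eq0 ?intr_eq0.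
have E : numq q * b = a * denq q.
  apply: (@intr_inj rat); rewrite !rmorphM /= numqE /q.
  by field; rewrite intr_eq0.
have E2 : (`|numq q| * `|b| = `|a| * `|denq q|)%N by rewrite -!abszM E.
have n0 : (0 < `|numq q|)%N by rewrite absz_gt0 numq_eq0.
have d0 : (0 < `|denq q|)%N by rewrite absz_gt0 denq_neq0.
have a0' : (0 < `|a|)%N by rewrite absz_gt0.
have b0' : (0 < `|b|)%N by rewrite absz_gt0.
have := congr1 (logn 11) E2; rewrite !lognM // => E3.
rewrite /vp; lia.
Qed.


Lemma ratE (a : rat) : a = (numq a)%:~R / (denq a)%:~R.
Proof. by rewrite divq_num_den. Qed.

Lemma vpM (a b : rat) : a != 0 -> b != 0 -> vp (a * b) = vp a + vp b.
Proof.
move=> a0 b0.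
have na : numq a != 0 by rewrite numq_eq0.
have nb : numq b != 0 by rewrite numq_eq0.
have E : a * b = (numq a * numq b)%:~R / (denq a * denq b)%:~R.
  rewrite {1}(ratE a) {1}(ratE b) !rmorphM /=; field.
  by rewrite !intr_eq0 !denq_neq0.
have va : vp a = (logn 11 `|numq a|)%:Z - (logn 11 `|denq a|)%:Z.
  by rewrite {1}(ratE a) vp_frac ?denq_neq0.
have vb : vp b = (logn 11 `|numq b|)%:Z - (logn 11 `|denq b|)%:Z.
  by rewrite {1}(ratE b) vp_frac ?denq_neq0.
rewrite E vp_frac ?mulf_neq0 ?denq_neq0 // va vb.
rewrite !abszM !lognM ?absz_gt0 ?denq_neq0 //; lia.
Qed.

Lemma vpV (a : rat) : vp (a^-1) = - vp a.
Proof.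
have [->|a0] := eqVneq a 0; first by rewrite invr0 /vp.
have na : numq a != 0 by rewrite numq_eq0.
have va : vp a = (logn 11 `|numq a|)%:Z - (logn 11 `|denq a|)%:Z.
  by rewrite {1}(ratE a) vp_frac ?denq_neq0.
rewrite va {1}(ratE a) invf_div vp_frac ?denq_neq0 //; lia.
Qed.

Lemma vp_int (z : int) : z != 0 -> vp z%:~R = (logn 11 `|z|)%:Z.
Proof.
move=> z0; have -> : (z%:~R : rat) = z%:~R / (1%:Z)%:~R by rewrite divr1.
rewrite vp_frac // ; rewrite absz1 logn1 ; lia.
Qed.

Lemma vp_nat (n : nat) : vp n%:R = (logn 11 n)%:Z.
Proof.
case: n => [|n]; first by rewrite /vp.
by rewrite -[_%:R]/((Posz n.+1)%:~R) vp_int.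
Qed.

Lemma logn_add (A B : int) : A + B != 0 ->
  (minn (logn 11 (absz A)) (logn 11 (absz B)) <= logn 11 (absz (A + B)%R))%N.
Proof.
move=> AB0; set k := minn _ _.
have dA : (11 ^ k %| absz A)%N.
  by apply: dvdn_trans (pfactor_dvdnn 11 _); rewrite dvdn_exp2l // geq_minl.
have dB : (11 ^ k %| absz B)%N.
  by apply: dvdn_trans (pfactor_dvdnn 11 _); rewrite dvdn_exp2l // geq_minr.
have : ((11 ^ k)%:Z %| A + B)%Z.
  by apply: rpredD; rewrite dvdzE...
rewrite dvdzE /= => H.
by rewrite -pfactor_dvdn // absz_gt0.
Qed.

Lemma vpD (a b : rat) (k : int) : a != 0 -> b != 0 -> a + b != 0 ->
  k <= vp a -> k <= vp b -> k <= vp (a + b).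
Proof.
move=> a0 b0 ab0 ha hb.
set D := denq a * denq b.
have D0 : D != 0 by rewrite mulf_neq0 ?denq_neq0.
set A := numq a * denq b; set B := numq b * denq a.
have Ea : a = A%:~R / D%:~R.
  rewrite {1}(ratE a) /A /D !rmorphM /=; field.
  by rewrite !intr_eq0 !denq_neq0.
have Eb : b = B%:~R / D%:~R.
  rewrite {1}(ratE b) /B /D !rmorphM /=; field.
  by rewrite !intr_eq0 !denq_neq0.
have A0 : A != 0 by rewrite mulf_neq0 ?numq_eq0 ?denq_neq0.
have B0 : B != 0 by rewrite mulf_neq0 ?numq_eq0 ?denq_neq0.
have Eab : a + b = (A + B)%:~R / D%:~R by rewrite Ea Eb rmorphD /= mulrDl.
have AB0 : A + B != 0.
  by apply: contra ab0; rewrite Eab => /eqP ->; rewrite mul0r.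
move: ha hb; rewrite Eab Ea Eb !vp_frac // => ha hb.
have := @logn_add A B AB0; move: ha hb; move: (logn 11 `|A|) (logn 11 `|B|) (logn 11 `|A + B|) (logn 11 `|D|) => x1 x2 x3 x4; lia.
Qed.


Definition smallz (k : int) (q : rat) := (q == 0) || (k <= vp q).

Lemma smallz0 k : smallz k 0. Proof. by rewrite /smallz eqxx. Qed.

Lemma smallzW l k a : l <= k -> smallz k a -> smallz l a.
Proof. by move=> lk /orP [/eqP->|h]; [exact: smallz0|]; rewrite /smallz (le_trans lk h) orbT. Qed.

Lemma vpN a : vp (- a) = vp a.
Proof.
have [->|a0] := eqVneq a 0; first by rewrite oppr0.
rewrite -mulN1r vpM ?oppr_eq0 ?oner_eq0 //.
by rewrite -[-1]/((-1)%:~R) vp_int // ; rewrite add0r.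
Qed.

Lemma smallzN k a : smallz k (- a) = smallz k a.
Proof. by rewrite /smallz oppr_eq0 vpN. Qed.

Lemma smallzD k a b : smallz k a -> smallz k b -> smallz k (a + b).
Proof.
move=> /orP[/eqP->|ha]; first by rewrite add0r.
move=> /orP[/eqP->|hb]; first by rewrite addr0 /smallz ha orbT.
have [->|ab0] := eqVneq (a + b) 0; first exact: smallz0.
have [->|a0] := eqVneq a 0; first by rewrite add0r /smallz hb orbT.
have [->|b0] := eqVneq b 0; first by rewrite addr0 /smallz ha orbT.
by rewrite /smallz (@vpD a b k a0 b0 ab0 ha hb) orbT.
Qed.

Lemma smallzB k a b : smallz k a -> smallz k b -> smallz k (a - b).
Proof. by move=> ha hb; apply: smallzD => //; rewrite smallzN. Qed.

Lemma smallzM k l a b : smallz k a -> smallz l b -> smallz (k + l) (a * b).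
Proof.
move=> /orP[/eqP->|ha]; first by rewrite mul0r smallz0.
move=> /orP[/eqP->|hb]; first by rewrite mulr0 smallz0.
have [->|a0] := eqVneq a 0; first by rewrite mul0r smallz0.
have [->|b0] := eqVneq b 0; first by rewrite mulr0 smallz0.
by rewrite /smallz vpM // lerD // orbT.
Qed.

Lemma smallz_vp a : smallz (vp a) a.
Proof. by rewrite /smallz lexx orbT. Qed.

Lemma smallzV a : smallz (- vp a) (a^-1).
Proof. by rewrite -vpV smallz_vp. Qed.

Lemma smallz_div k a b : smallz k (a * b) -> b != 0 -> smallz (k - vp b) a.
Proof.
move=> h b0; have -> : a = (a * b) * b^-1 by rewrite mulfK.
by rewrite -[k - _]/(k + - vp b); apply: smallzM => //; rewrite -vpV smallz_vp.
Qed.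

Lemma smallzX k a m : smallz k a -> smallz (k * m%:Z) (a ^+ m).
Proof.
move=> h; elim: m => [|m IH]; first by rewrite mulr0 expr0 /smallz -[1]/(1%:R) vp_nat logn1 lexx orbT.
by rewrite exprS -[m.+1]/(1 + m)%N PoszD mulrDr mulr1; apply: smallzM.
Qed.

Lemma smallz_sum (I : Type) (r : seq I) (P : pred I) (F : I -> rat) k :
  (forall i, P i -> smallz k (F i)) -> smallz k (\sum_(i <- r | P i) F i).
Proof.
move=> h; elim/big_rec: _ => [|i x Pi hx]; first exact: smallz0.
exact: smallzD (h i Pi) hx.
Qed.

Lemma smallz_eq e k a b : e < k -> smallz k (a - b) -> b != 0 -> vp b = e ->
  a != 0 /\ vp a = e.
Proof.
move=> ek hab b0 vb.
have ek1 : e + 1 <= k by rewrite lezD1.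
have hab1 : smallz (e + 1) (a - b) by apply: smallzW hab.
have hb : ~~ smallz (e + 1) b.
  by rewrite /smallz (negbTE b0) /= vb -ltNge ltrDl.
have a0 : a != 0.
  by apply: contra hb => /eqP a0; rewrite -smallzN; move: hab1; rewrite a0 sub0r.
split=> //.
have ha1 : smallz e a.
  have -> : a = (a - b) + b by rewrite subrK.
  apply: smallzD; last by rewrite /smallz vb lexx orbT.
  by apply: smallzW hab1; rewrite lerDl.
have : e <= vp a by move: ha1; rewrite /smallz (negbTE a0).
rewrite le_eqVlt => /orP[/eqP->//|lt].
exfalso; move/negP: hb; apply.
have -> : b = a - (a - b) by rewrite opprB addrC subrK.
apply: smallzB => //; rewrite /smallz (negbTE a0) /=.
by rewrite lezD1.
Qed.

Lemma vp11X k : vp (11 ^+ k) = k%:Z.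
Proof. by rewrite -natrX vp_nat pfactorK. Qed.


Definition ev (P : nat -> Prop) := exists N, forall n, (N <= n)%N -> P n.
Definition pdz (k : int) (x : padic) := ev (fun n => smallz k (x n)).
Definition cauchy (x : padic) := forall k : int, exists N, forall n m,
  (N <= n)%N -> (N <= m)%N -> smallz k (x n - x m).

Lemma ev2 P Q : ev P -> ev Q -> ev (fun n => P n /\ Q n).
Proof.
move=> [N1 h1] [N2 h2]; exists (maxn N1 N2) => n hn; split.
  by apply: h1; apply: leq_trans hn; rewrite leq_maxl.
by apply: h2; apply: leq_trans hn; rewrite leq_maxr.
Qed.

Lemma ev_mono (P Q : nat -> Prop) : (forall n, P n -> Q n) -> ev P -> ev Q.
Proof. by move=> h [N hN]; exists N => n /hN /h. Qed.

Lemma ev_true (P : nat -> Prop) : (forall n, P n) -> ev P.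
Proof. by move=> h; exists 0%N. Qed.

Lemma ev_ge N : ev (fun n => (N <= n)%N).
Proof. by exists N. Qed.

Lemma cauchyE x : is_cauchy x <-> cauchy x.
Proof.
split=> h k; last exact: h.
have [N hN] := h `|k|%N; exists N => n m hn hm.
apply: smallzW (hN n m hn hm).
by case: k {hN} => k //=; rewrite (le_trans (lerN10 _)).
Qed.

Lemma pdz_W l k x : l <= k -> pdz k x -> pdz l x.
Proof. by move=> lk; rewrite /pdz; apply: ev_mono => n; apply: smallzW. Qed.

Lemma pdzD k x y : pdz k x -> pdz k y -> pdz k (fun n => x n + y n).
Proof. by move=> hx hy; move: (ev2 hx hy); apply: ev_mono => n [a b]; apply: smallzD. Qed.

Lemma pdzB k x y : pdz k x -> pdz k y -> pdz k (fun n => x n - y n).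
Proof. by move=> hx hy; move: (ev2 hx hy); apply: ev_mono => n [a b]; apply: smallzB. Qed.

Lemma pdzN k x : pdz k x -> pdz k (fun n => - x n).
Proof. by rewrite /pdz; apply: ev_mono => n; rewrite smallzN. Qed.

Lemma pdzM k l x y : pdz k x -> pdz l y -> pdz (k + l) (fun n => x n * y n).
Proof. by move=> hx hy; move: (ev2 hx hy); apply: ev_mono => n [a b]; apply: smallzM. Qed.

Lemma pdz_ext k x y : ev (fun n => x n = y n) -> pdz k x -> pdz k y.
Proof. by move=> he hx; move: (ev2 he hx); apply: ev_mono => n [-> ]. Qed.

Lemma pdz0 k : pdz k (fun _ => 0).
Proof. by rewrite /pdz; apply: ev_true => n; apply: smallz0. Qed.

Lemma cauchy_const q : cauchy (fun _ => q).
Proof. by move=> k; exists 0%N => n m _ _; rewrite subrr smallz0. Qed.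

Lemma cauchy_ev_pdz x k : cauchy x -> ev (fun N => forall n m, (N <= n)%N -> (N <= m)%N -> smallz k (x n - x m)).
Proof.
move=> h; have [N hN] := h k; exists N => N' hN' n m hn hm.
by apply: hN; apply: leq_trans hN' _.
Qed.

Lemma cauchyD x y : cauchy x -> cauchy y -> cauchy (fun n => x n + y n).
Proof.
move=> hx hy k; have [N1 h1] := hx k; have [N2 h2] := hy k.
exists (maxn N1 N2) => n m hn hm.
have -> : x n + y n - (x m + y m) = (x n - x m) + (y n - y m) by ring.
apply: smallzD; [apply: h1|apply: h2]; lia.
Qed.

Lemma cauchyN x : cauchy x -> cauchy (fun n => - x n).
Proof.
move=> hx k; have [N h] := hx k; exists N => n m hn hm.
by rewrite -opprD smallzN; apply: h.
Qed.

Lemma cauchyB x y : cauchy x -> cauchy y -> cauchy (fun n => x n - y n).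
Proof. by move=> hx hy; apply: (cauchyD hx (cauchyN hy)). Qed.

Lemma cauchy_bnd x : cauchy x -> exists B, pdz B x.
Proof.
move=> hx; have [N h] := hx 0.
exists (Num.min 0 (vp (x N))); exists N => n hn.
have -> : x n = (x n - x N) + x N by rewrite subrK.
apply: smallzD; first by apply: smallzW (h n N hn (leqnn _)); rewrite ge_min lexx.
by apply: smallzW (smallz_vp _); rewrite ge_min lexx orbT.
Qed.

Lemma cauchyM x y : cauchy x -> cauchy y -> cauchy (fun n => x n * y n).
Proof.
move=> hx hy k; have [Bx [Nx bx]] := cauchy_bnd hx; have [By [Ny bY]] := cauchy_bnd hy.
have [N1 h1] := hx (k - By); have [N2 h2] := hy (k - Bx).
exists (maxn (maxn Nx Ny) (maxn N1 N2)) => n m hn hm.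
have -> : x n * y n - x m * y m = x n * (y n - y m) + (x n - x m) * y m by ring.
apply: smallzD.
  have -> : k = Bx + (k - Bx) by ring.
  apply: smallzM; [apply: bx|apply: h2]; lia.
have -> : k = (k - By) + By by ring.
apply: smallzM; [apply: h1|apply: bY]; lia.
Qed.

Lemma cauchy_ext x y : ev (fun n => x n = y n) -> cauchy x -> cauchy y.
Proof.
move=> [N0 h0] hx k; have [N h] := hx k; exists (maxn N0 N) => n m hn hm.
have {}h0 n' (hn' : (N0 <= n')%N) : x n' = y n' := h0 n' hn'.
rewrite -(h0 n) ?(leq_trans (leq_maxl _ _) hn) // -(h0 m) ?(leq_trans (leq_maxl _ _) hm) //.
apply: h; lia.
Qed.

Lemma cauchyX x m : cauchy x -> cauchy (fun n => x n ^+ m).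
Proof.
move=> hx; elim: m => [|m IH].
  by apply: (cauchy_ext (x := fun _ => 1)); [apply: ev_true => n; rewrite expr0|exact: cauchy_const].
apply: (cauchy_ext (x := fun n => x n * x n ^+ m)); first by apply: ev_true => n; rewrite exprS.
exact: cauchyM.
Qed.

Lemma cauchyV x e : cauchy x -> ev (fun n => x n != 0 /\ vp (x n) = e) ->
  cauchy (fun n => (x n)^-1).
Proof.
move=> hx [N0 h0] k; have [N1 h1] := hx (k + e + e).
exists (maxn N0 N1) => n m hn hm.
have [xn0 vxn] := h0 n (leq_trans (leq_maxl _ _) hn).
have [xm0 vxm] := h0 m (leq_trans (leq_maxl _ _) hm).
have -> : (x n)^-1 - (x m)^-1 = (x m - x n) * (x n)^-1 * (x m)^-1.
  by field; rewrite xn0 xm0.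
have -> : k = k + e + e + - vp (x n) + - vp (x m) by rewrite vxn vxm; ring.
apply: smallzM; last exact: smallzV.
apply: smallzM; last exact: smallzV.
by rewrite -smallzN opprB; apply: h1; lia.
Qed.

Lemma cauchy_sum (t : nat -> padic) M : (forall m, cauchy (t m)) ->
  cauchy (fun n => \sum_(m < M) t m n).
Proof.
move=> ht; elim: M => [|M IH].
  by apply: (cauchy_ext (x := fun _ => 0)); [apply: ev_true => n; rewrite big_ord0|exact: cauchy_const].
apply: (cauchy_ext (x := fun n => \sum_(m < M) t m n + t M n)).
  by apply: ev_true => n; rewrite big_ord_recr.
exact: cauchyD.
Qed.



Fixpoint runmax (f : nat -> nat) (n : nat) : nat :=
  match n with 0 => f 0%N | S n' => maxn (runmax f n') (f n) end.

Lemma runmax_ge f n : (f n <= runmax f n)%N.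
Proof. by case: n => [|n] //=; rewrite leq_maxr. Qed.

Lemma runmax_mono f n n' : (n <= n')%N -> (runmax f n <= runmax f n')%N.
Proof.
elim: n' => [|n' IH]; first by rewrite leqn0 => /eqP->.
rewrite leq_eqVlt => /orP[/eqP->//|]; rewrite ltnS => /IH h.
by apply: leq_trans h _; rewrite /= leq_maxl.
Qed.

Lemma smallz3 k a b c d : smallz k (a - b) -> smallz k (b - c) -> smallz k (c - d) ->
  smallz k (a - d).
Proof.
move=> h1 h2 h3; have -> : a - d = (a - b) + (b - c) + (c - d) by ring.
by apply: smallzD => //; apply: smallzD.
Qed.

Lemma complete (u : nat -> padic) :
  (forall m, cauchy (u m)) ->
  (forall k : nat, exists M, forall m m', (M <= m)%N -> (M <= m')%N ->
      pdz k%:Z (fun n => u m n - u m' n)) ->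
  exists y, cauchy y /\ pconv u y.
Proof.
move=> hc hu.
pose M0 k := proj1_sig (constructive_indefinite_description _ (hu k)).
have hM0 k : forall m m', (M0 k <= m)%N -> (M0 k <= m')%N ->
      pdz k%:Z (fun n => u m n - u m' n).
  exact: (proj2_sig (constructive_indefinite_description _ (hu k))).
pose Mf := runmax M0.
have hMf k n : (k <= n)%N -> (M0 k <= Mf n)%N.
  by move=> kn; apply: leq_trans (runmax_ge _ _) (runmax_mono _ kn).
have hMm n n' : (n <= n')%N -> (Mf n <= Mf n')%N by apply: runmax_mono.
pose Nf n := proj1_sig (constructive_indefinite_description _ (hc (Mf n) n%:Z)).
have hNf n : forall a b, (Nf n <= a)%N -> (Nf n <= b)%N ->
    smallz n%:Z (u (Mf n) a - u (Mf n) b).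
  exact: (proj2_sig (constructive_indefinite_description _ (hc (Mf n) n%:Z))).
pose y n := u (Mf n) (Nf n).
have aux n n' : (n <= n')%N -> smallz n%:Z (y n - y n').
  move=> nn'.
  have [T hT] := hM0 n (Mf n) (Mf n') (hMf _ _ (leqnn _)) (hMf _ _ nn').
  pose r := maxn T (maxn (Nf n) (Nf n')).
  apply: (@smallz3 _ _ (u (Mf n) r) (u (Mf n') r)).
  - apply: hNf => //; rewrite /r; lia.
  - apply: hT; rewrite /r; lia.
  - apply: smallzW (hNf n' _ _ _ _); rewrite ?lez_nat //; rewrite /r; lia.
exists y; split.
  move=> k; exists `|k|%N => n m hn hm.
  have kle (j : nat) : (`|k| <= j)%N -> k <= j%:Z.
    move=> h; lia.
  have [nm|mn] := leqP n m.
    by apply: smallzW (aux _ _ nm); apply: kle.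
  rewrite -smallzN opprB; apply: smallzW (aux _ _ (ltnW mn)); exact: kle.
move=> k; exists (Mf k) => m hm.
have [C hC] := hc m k%:Z.
exists (maxn k C) => n hn.
have hkn : (k <= n)%N by apply: leq_trans hn; rewrite leq_maxl.
have [T hT] := hM0 k m (Mf n) (leq_trans (hMf _ _ (leqnn _)) hm) (hMf _ _ hkn).
pose r := maxn T (maxn C (Nf n)).
apply: (@smallz3 _ _ (u m r) (u (Mf n) r)).
- apply: hC; rewrite /r; lia.
- apply: hT; rewrite /r; lia.
- apply: smallzW (hNf n _ _ _ _); rewrite ?lez_nat //; rewrite /r; lia.
Qed.

Lemma lim_approx u y (k : nat) z : pconv u y ->
  (exists M1, forall m, (M1 <= m)%N -> pdz k%:Z (fun n => u m n - z n)) ->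
  pdz k%:Z (fun n => y n - z n).
Proof.
move=> hc [M1 h1]; have [M hM] := hc k.
have hm := hM (maxn M M1) (leq_maxl _ _).
have hm1 := h1 (maxn M M1) (leq_maxr _ _).
move: (pdzB hm1 hm); apply: pdz_ext; apply: ev_true => n /=; ring.
Qed.

Lemma sum_diff (t : nat -> rat) m m' : (m <= m')%N ->
  \sum_(j < m') t j - \sum_(j < m) t j = \sum_(m <= j < m') t j.
Proof.
move=> mm'; rewrite -!(big_mkord xpredT) (big_cat_nat (leq0n m) mm') /=.
by rewrite addrAC subrr add0r.
Qed.

Lemma series_lim (t : nat -> padic) (g : nat -> int) N0 :
  (forall m, cauchy (t m)) ->
  (forall m n, (N0 <= n)%N -> smallz (g m) (t m n)) ->
  (forall k : int, exists M, forall m, (M <= m)%N -> k <= g m) ->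
  exists y, cauchy y /\ pconv (fun M n => \sum_(m < M) t m n) y.
Proof.
move=> hc hb hg; apply: complete.
  by move=> M; apply: cauchy_sum.
move=> k; have [M hM] := hg k%:Z; exists M => m m' hm hm'.
exists N0 => n hn.
have key a b : (M <= a)%N -> (a <= b)%N ->
    smallz k%:Z (\sum_(j < b) t j n - \sum_(j < a) t j n).
  move=> ha ab; rewrite (sum_diff (fun j => t j n)) // big_nat_cond; apply: smallz_sum => j /andP[/andP[aj _] _].
  by apply: smallzW (hb j n hn); apply: hM; apply: leq_trans ha _.
have [mm'|m'm] := leqP m m'.
  by rewrite -smallzN opprB; apply: key.
by apply: key => //; apply: ltnW.
Qed.


Definition int11 (q : rat) := smallz 0 q.

Lemma int11D a b : int11 a -> int11 b -> int11 (a + b). Proof. exact: smallzD. Qed.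
Lemma int11B a b : int11 a -> int11 b -> int11 (a - b). Proof. exact: smallzB. Qed.
Lemma int11N a : int11 a -> int11 (- a). Proof. by rewrite /int11 smallzN. Qed.
Lemma int11M a b : int11 a -> int11 b -> int11 (a * b). Proof. exact: smallzM. Qed.
Lemma int11X a m : int11 a -> int11 (a ^+ m).
Proof. by move=> h; have := smallzX m h; rewrite mul0r. Qed.
Lemma int11_nat n : int11 n%:R.
Proof. by rewrite /int11 /smallz vp_nat lez_nat leq0n orbT. Qed.
Lemma int11_1 : int11 1. Proof. exact: (int11_nat 1). Qed.
Lemma int11_0 : int11 0. Proof. exact: smallz0. Qed.
Lemma int11_sum (I : Type) (r : seq I) (F : I -> rat) :
  (forall i, int11 (F i)) -> int11 (\sum_(i <- r) F i).
Proof. by move=> h; apply: smallz_sum => i _; apply: h. Qed.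

Ltac int11 := repeat match goal with
  | |- is_true (int11 (_ + _)) => apply: int11D
  | |- is_true (int11 (_ - _)) => apply: int11B
  | |- is_true (int11 (- _)) => apply: int11N
  | |- is_true (int11 (_ * _)) => apply: int11M
  | |- is_true (int11 (_ ^+ _)) => apply: int11X
  | |- is_true (int11 1) => apply: int11_1
  | |- is_true (int11 0) => apply: int11_0
  | |- is_true (int11 (_ %:R)) => apply: int11_nat
  | H : is_true (int11 ?x) |- is_true (int11 ?x) => exact H
  end.

Lemma smallzMl k a b : int11 a -> smallz k b -> smallz k (a * b).
Proof. by move=> ha hb; have := smallzM ha hb; rewrite add0r. Qed.
Lemma smallzMr k a b : smallz k a -> int11 b -> smallz k (a * b).
Proof. by move=> ha hb; have := smallzM ha hb; rewrite addr0. Qed.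

Lemma vp11 : vp 11 = 1. Proof. by rewrite -[11]/(11%:R) vp_nat (pfactorK 1 p11). Qed.
Lemma smallz_11 a : int11 a -> smallz 1 (11 * a).
Proof. by move=> h; have := smallzM (smallz_vp 11) h; rewrite vp11 addr0. Qed.

Lemma powdiff k a b m : int11 a -> int11 b -> smallz k (a - b) ->
  smallz k (a ^+ m - b ^+ m).
Proof.
move=> ha hb hab; rewrite subrXX; apply: smallzMr => //.
by apply: int11_sum => i; int11.
Qed.

Lemma pow11 k a b : 1 <= k -> int11 a -> int11 b -> smallz k (a - b) ->
  smallz (k + 1) (a ^+ 11 - b ^+ 11).
Proof.
move=> k1 ha hb hab; rewrite subrXX; apply: smallzM => //.
set S := \sum_(i < 11) _.
have E : S = \sum_(i < 11) ((a ^+ (11.-1 - i) - b ^+ (11.-1 - i)) * b ^+ i)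
            + \sum_(i < 11) b ^+ 10.
  rewrite -big_split; apply: eq_bigr => i _ /=.
  have hi : (10 - i + i = 10)%N by have := ltn_ord i; lia.
  have -> : b ^+ 10 = b ^+ (10 - i) * b ^+ i by rewrite -exprD hi.
  ring.
rewrite E; apply: smallzD.
  apply: smallz_sum => i _; apply: smallzMr; last by int11.
  by apply: powdiff => //; apply: smallzW hab.
rewrite sumr_const card_ord -mulr_natl; exact: smallz_11 (int11X _ hb).
Qed.

Lemma iter11 k a b j : 1 <= k -> int11 a -> int11 b -> smallz k (a - b) ->
  smallz (k + j%:Z) (a ^+ (11 ^ j) - b ^+ (11 ^ j)).
Proof.
move=> k1 ha hb hab; elim: j => [|j IH]; first by rewrite addr0 expn0 !expr1.
rewrite expnSr !exprM -addn1 PoszD addrA.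
apply: pow11 => //; first by apply: le_trans k1 _; rewrite lerDl.
all: by int11.
Qed.

Lemma fermat b : int11 b -> smallz 1 (b ^+ 2 - b - 1) -> smallz 1 (b ^+ 11 - b).
Proof.
move=> hb h.
have -> : b ^+ 11 - b = (b ^+ 2 - b - 1) *
  (b ^+ 9 + b ^+ 8 + 2%:R * b ^+ 7 + 3%:R * b ^+ 6 + 5%:R * b ^+ 5 + 8%:R * b ^+ 4
   + 13%:R * b ^+ 3 + 21%:R * b ^+ 2 + 34%:R * b + 55%:R) + 11 * (8%:R * b + 5%:R).
  by ring.
apply: smallzD; last by apply: smallz_11; int11.
by apply: smallzMr => //; int11.
Qed.

Lemma fermat_iter b j : int11 b -> smallz 1 (b ^+ 11 - b) -> smallz 1 (b ^+ (11 ^ j) - b).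
Proof.
move=> hb hf; elim: j => [|j IH]; first by rewrite expn0 expr1 subrr smallz0.
have -> : b ^+ (11 ^ j.+1) - b = ((b ^+ (11 ^ j)) ^+ 11 - b ^+ 11) + (b ^+ 11 - b).
  by rewrite expnSr exprM; ring.
apply: smallzD => //; apply: (@smallzW _ (1 + 1)) => //.
by apply: pow11 => //; int11.
Qed.

Lemma unit11 a b : int11 a -> int11 b -> smallz 1 (a * b - 1) -> a != 0 /\ vp a = 0.
Proof.
move=> ha hb h.
have [ab0 vab] := smallz_eq (e := 0) (k := 1) ltr01 h (oner_neq0 _) (vp_nat 1).
have a0 : a != 0 by apply: contra ab0 => /eqP->; rewrite mul0r.
have b0 : b != 0 by apply: contra ab0 => /eqP->; rewrite mulr0.
split=> //; move: vab ha hb; rewrite vpM // /int11 /smallz (negbTE a0) (negbTE b0) /=.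
move=> h1 h2 h3; lia.
Qed.

Lemma unit_of_sq a : int11 a -> smallz 1 (a ^+ 2 - a - 1) -> a != 0 /\ vp a = 0.
Proof.
move=> ha h; apply: (@unit11 a (a - 1)) => //; first by int11.
by have -> : a * (a - 1) - 1 = a ^+ 2 - a - 1 by ring.
Qed.

Lemma unit_near a b : smallz 1 (a - b) -> b != 0 -> vp b = 0 -> a != 0 /\ vp a = 0.
Proof. by move=> h b0 vb; apply: (smallz_eq (k := 1) ltr01 h b0 vb). Qed.

Lemma teich (a : padic) : is_cauchy a -> pdz 0 a ->
  pdz 1 (fun n => a n ^+ 2 - a n - 1) ->
  exists w, is_cauchy w /\ peq (fun n => w n ^+ 10) (pconst 1) /\
    pdvd 1 (fun n => w n - a n).
Proof.
move=> /cauchyE hc h0 h1.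
have [N1 hN1] := ev2 (ev2 h0 h1) (cauchy_ev_pdz 1 hc).
have hN1' n : (N1 <= n)%N -> [/\ int11 (a n), smallz 1 (a n ^+ 2 - a n - 1) &
   forall n' m', (n <= n')%N -> (n <= m')%N -> smallz 1 (a n' - a m')].
  by move=> hn; have [[x y] z] := hN1 n hn; split.
pose w n := a n ^+ (11 ^ n).
have aux n m : (N1 <= n)%N -> (n <= m)%N -> smallz (1 + n%:Z) (w n - w m).
  move=> hn nm; have [an1 an2 an3] := hN1' n hn.
  have [am1 am2 _] := hN1' m (leq_trans hn nm).
  have E : w m = (a m ^+ (11 ^ (m - n))) ^+ (11 ^ n).
    by rewrite /w -exprM -expnD subnK.
  rewrite E; apply: (@smallz3 _ _ (a m ^+ (11 ^ n)) (a m ^+ (11 ^ n))).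
  - by apply: iter11 => //; apply: an3.
  - by rewrite subrr smallz0.
  - apply: iter11 => //; int11.
    by rewrite -smallzN opprB; apply: fermat_iter => //; apply: fermat.
exists w; split.
  apply/cauchyE => k; exists (maxn N1 `|k|) => n m hn hm.
  have [nm|mn] := leqP n m.
    apply: smallzW (aux n m _ nm); lia.
  rewrite -smallzN opprB; apply: smallzW (aux m n _ (ltnW mn)); lia.
have wunit n : (N1 <= n)%N -> w n != 0 /\ vp (w n) = 0.
  move=> hn; have [an1 an2 _] := hN1' n hn.
  have [a0 va] := unit_of_sq an1 an2.
  by apply: (unit_near _ a0 va); apply: fermat_iter => //; apply: fermat.
split.
  move=> k; exists (maxn N1 k) => n hn.
  have hn1 : (N1 <= n)%N by apply: leq_trans hn; rewrite leq_maxl.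
  have [an1 an2 _] := hN1' n hn1.
  have [w0 vw] := wunit n hn1.
  have h11 : smallz (1 + n%:Z) (w n * (w n ^+ 10 - 1)).
    have -> : w n * (w n ^+ 10 - 1) = (a n ^+ 11) ^+ (11 ^ n) - a n ^+ (11 ^ n).
      have -> : (a n ^+ 11) ^+ (11 ^ n) = w n ^+ 11 by rewrite /w -!exprM mulnC.
      rewrite -/(w n); move: (w n) => x; ring.
    by apply: iter11 => //; int11; apply: fermat.
  rewrite mulrC in h11; have := smallz_div h11 w0.
  rewrite vw subr0 /pconst.
  by apply: smallzW; lia.
exists N1 => n hn; have [an1 an2 _] := hN1' n hn.
by apply: fermat_iter => //; apply: fermat.
Qed.


Lemma exp11_ge j : (0 < j)%N -> (2 * j + 2 <= 11 ^ j)%N.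
Proof.
elim: j => [//|j IH] _; case: j IH => [//|j] IH.
move: (IH isT) => H; rewrite expnS; lia.
Qed.

Lemma logn_bnd m : (0 < m)%N -> (0 < logn 11 m)%N -> (2 * logn 11 m + 2 <= m)%N.
Proof.
move=> m0 l0; apply: leq_trans (exp11_ge l0) _.
by apply: dvdn_leq => //; apply: pfactor_dvdnn.
Qed.

Lemma logn_fact_bnd m : (10 * logn 11 m`! <= m)%N.
Proof.
rewrite logn_fact //.
suff H : forall K, (10 * \sum_(1 <= k < K.+1) m %/ 11 ^ k + m %/ 11 ^ K <= m)%N.
  by apply: leq_trans (H m); apply: leq_addr.
elim=> [|K IH]; first by rewrite big_geq // expn0 divn1.
rewrite big_nat_recr //=.
have h : (11 * (m %/ 11 ^ K.+1) <= m %/ 11 ^ K)%N.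
  by rewrite expnSr divnMA mulnC leq_trunc_div.
lia.
Qed.

Lemma fib_pow a j : int11 a -> smallz 1 (a ^+ 2 - a - 1) ->
  smallz 1 (a ^+ j.+1 - (fib j.+1)%:R * a - (fib j)%:R).
Proof.
move=> ha h; elim: j => [|j IH]; first by rewrite /= expr1 mul1r !subrr smallz0.
have -> : a ^+ j.+2 - (fib j.+2)%:R * a - (fib j.+1)%:R =
   a * (a ^+ j.+1 - (fib j.+1)%:R * a - (fib j)%:R) + (fib j.+1)%:R * (a ^+ 2 - a - 1).
  rewrite [fib j.+2]/= natrD exprS; ring.
by apply: smallzD; apply: smallzMl => //; int11.
Qed.


Lemma peq0_pdz x (k : nat) : peq x (pconst 0) -> pdz k%:Z x.
Proof. move=> h; move: (h k); apply: pdz_ext; apply: ev_true => n; by rewrite /pconst subr0. Qed.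

Lemma inZ11_cauchy x : inZ11 x -> cauchy x.
Proof. by case=> /cauchyE. Qed.

Lemma inZ11_int x : inZ11 x -> pdz 0 x.
Proof. by case. Qed.

Lemma omega_spec x : (exists w, is_cauchy w /\ peq (fun n => w n ^+ 10) (pconst 1) /\
    pdvd 1 (fun n => w n - x n)) ->
  is_cauchy (omega11 x) /\ peq (fun n => omega11 x n ^+ 10) (pconst 1) /\
    pdvd 1 (fun n => omega11 x n - x n).
Proof. exact: epsilon_spec. Qed.

Lemma plim_spec u : (exists y, is_cauchy y /\ pconv u y) -> is_cauchy (plim u) /\ pconv u (plim u).
Proof. exact: epsilon_spec. Qed.

Lemma pconv_ext u v y : (forall M n, u M n = v M n) -> pconv u y -> pconv v y.
Proof.
move=> e h k; have [M hM] := h k; exists M => m hm; move: (hM m hm).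
by apply: pdz_ext; apply: ev_true => n; rewrite e.
Qed.

Lemma pconv_shift u y : pconv u y -> pconv (fun M => u M.+1) y.
Proof. by move=> h k; have [M hM] := h k; exists M => m hm; apply: hM; apply: leqW. Qed.

Lemma g_lim (g : nat -> int) : (forall m, (0 < m)%N -> m%:Z - (logn 11 m)%:Z <= g m) ->
  forall k : int, exists M, forall m, (M <= m)%N -> k <= g m.
Proof.
move=> hg k; exists (2 * `|k| + 2)%N => m hm.
have m0 : (0 < m)%N by lia.
apply: le_trans (hg m m0).
case: (posnP (logn 11 m)) => [->|l0]; first by lia.
have := logn_bnd m0 l0; lia.
Qed.

Lemma pconvB u v y z : pconv u y -> pconv v z ->
  pconv (fun M n => u M n - v M n) (fun n => y n - z n).
Proof.
move=> hu hv k; have [M1 h1] := hu k; have [M2 h2] := hv k.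
exists (maxn M1 M2) => m hm.
have := pdzB (h1 m (leq_trans (leq_maxl _ _) hm)) (h2 m (leq_trans (leq_maxr _ _) hm)).
by apply: pdz_ext; apply: ev_true => n /=; ring.
Qed.

Lemma gF_lim : forall k : int, exists M, forall m, (M <= m)%N -> k <= m%:Z - (logn 11 m`!)%:Z.
Proof.
move=> k; exists (2 * `|k|)%N => m hm; have := logn_fact_bnd m; lia.
Qed.

Section Main.
Variables (phi : padic).
Hypothesis hphi : inZ11 phi.
Hypothesis heq : peq (fun n => phi n ^+ 2 - phi n - 1) (pconst 0).

Local Notation w := (omega11 phi).
Local Notation wb := (omega11 (fun n => 1 - phi n)).

Lemma wspec : is_cauchy w /\ peq (fun n => w n ^+ 10) (pconst 1) /\ pdvd 1 (fun n => w n - phi n).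
Proof.
apply: omega_spec; apply: teich.
- by case: hphi.
- exact: inZ11_int.
- exact: (peq0_pdz 1 heq).
Qed.

Lemma wbspec : is_cauchy wb /\ peq (fun n => wb n ^+ 10) (pconst 1) /\
  pdvd 1 (fun n => wb n - (1 - phi n)).
Proof.
apply: omega_spec; apply: teich.
- by apply/cauchyE; apply: cauchyB; [apply: cauchy_const|apply: inZ11_cauchy].
- move: (inZ11_int hphi); rewrite /pdz; apply: ev_mono => n /= h.
  by change (is_true (int11 (1 - phi n))); change (is_true (int11 (phi n))) in h; int11.
- move: (peq0_pdz 1 heq); apply: pdz_ext; apply: ev_true => n /=; ring.
Qed.

Record good (n : nat) : Prop := Good {
  g_phi : int11 (phi n);
  g_eq : smallz 2 (phi n ^+ 2 - phi n - 1);
  g_w0 : w n != 0;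
  g_wv : vp (w n) = 0;
  g_w1 : smallz 1 (w n - phi n);
  g_w10 : smallz 2 (w n ^+ 10 - 1);
  g_wbint : int11 (wb n);
  g_wb1 : smallz 1 (wb n - (1 - phi n));
  g_s0 : 2 * phi n - 1 != 0;
  g_sv : vp (2 * phi n - 1) = 0 }.

Lemma ev_good : ev good.
Proof.
have [_ [w10 w1]] := wspec; have [_ [_ wb1]] := wbspec.
have h1 := inZ11_int hphi; have h2 := peq0_pdz 2 heq; have h3 := w10 2%N.
move: (ev2 (ev2 (ev2 h1 h2) (ev2 h3 w1)) wb1); apply: ev_mono.
move=> n [[[p1 p2] [p3 p4]] p5].
have p3' : smallz 2 (w n ^+ 10 - 1) by move: p3; rewrite /pconst.
have [w0 wv] : w n != 0 /\ vp (w n) = 0.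
  have [p0 pv] := unit_of_sq p1 (@smallzW 1 2 _ isT p2).
  exact: unit_near p4 p0 pv.
have [s0 sv] : 2 * phi n - 1 != 0 /\ vp (2 * phi n - 1) = 0.
  have [q0 qv] : (2 * phi n - 1) ^+ 2 != 0 /\ vp ((2 * phi n - 1) ^+ 2) = 0.
    apply: (@smallz_eq 0 1 _ (5%:R)) => //.
    - have -> : (2 * phi n - 1) ^+ 2 - 5%:R = 4%:R * (phi n ^+ 2 - phi n - 1) by ring.
      by apply: smallzMl; [int11|apply: smallzW p2].
  have s0 : 2 * phi n - 1 != 0 by apply: contra q0 => /eqP->; rewrite expr0n.
  split=> //; move: qv; rewrite expr2 vpM //; lia.
have wbint : int11 (wb n).
  have -> : wb n = (wb n - (1 - phi n)) + (1 - phi n) by rewrite subrK.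
  by apply: int11D; [apply: smallzW p5|int11].
by constructor.
Qed.

Lemma notsmall k a : smallz k a -> ~~ smallz (k + 1) a -> a != 0 /\ vp a = k.
Proof.
rewrite /smallz => h1 h2; have a0 : a != 0 by apply: contra h2 => ->.
move: h1 h2; rewrite (negbTE a0) /= => h1 h2; split=> //; lia.
Qed.

Lemma d_val n : good n -> phi n / w n - 1 != 0 /\ vp (phi n / w n - 1) = 1.
Proof.
case=> p1 p2 w0 wv w1 w10 _ _ _ _.
set D := phi n / w n - 1.
have wi : int11 (w n)^-1 by have := smallzV (w n); rewrite wv oppr0.
have D1 : smallz 1 D.
  have -> : D = (phi n - w n) * (w n)^-1 by rewrite /D; field.
  by apply: smallzMr => //; rewrite -smallzN opprB.
have [q0 qv] : 5%:R * phi n + 3%:R != 0 /\ vp (5%:R * phi n + 3%:R) = 0.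
  apply: (@unit11 _ (5%:R * phi n - 8%:R)); try by int11.
  have -> : (5%:R * phi n + 3%:R) * (5%:R * phi n - 8%:R) - 1 = 25%:R * (phi n ^+ 2 - phi n - 1) by ring.
  by apply: smallzMl; [int11|apply: smallzW p2].
have [b0 bv] : 11 * (5%:R * phi n + 3%:R) != 0 /\ vp (11 * (5%:R * phi n + 3%:R)) = 1.
  by split; [rewrite mulf_neq0|rewrite vpM // vp11 qv].
have [P0 Pv] : phi n ^+ 10 - 1 != 0 /\ vp (phi n ^+ 10 - 1) = 1.
  apply: (@smallz_eq 1 2 _ _ _ _ b0 bv) => //.
  have -> : phi n ^+ 10 - 1 - 11 * (5%:R * phi n + 3%:R) = (phi n ^+ 2 - phi n - 1) *
    (phi n ^+ 8 + phi n ^+ 7 + 2%:R * phi n ^+ 6 + 3%:R * phi n ^+ 5 + 5%:R * phi n ^+ 4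
     + 8%:R * phi n ^+ 3 + 13%:R * phi n ^+ 2 + 21%:R * phi n + 34%:R) by ring.
  by apply: smallzMr => //; int11.
have [P20 P2v] : phi n ^+ 10 - w n ^+ 10 != 0 /\ vp (phi n ^+ 10 - w n ^+ 10) = 1.
  apply: (@smallz_eq 1 2 _ _ _ _ P0 Pv) => //.
  have -> : phi n ^+ 10 - w n ^+ 10 - (phi n ^+ 10 - 1) = - (w n ^+ 10 - 1) by ring.
  by rewrite smallzN.
have [W0 Wv] : w n ^+ 10 != 0 /\ vp (w n ^+ 10) = 0.
  by apply: (@smallz_eq 0 2 _ 1 _ w10 (oner_neq0 _)) => //; rewrite -[1]/(1%:R) vp_nat.
have E : w n ^+ 10 * ((D + 1) ^+ 10 - 1) = phi n ^+ 10 - w n ^+ 10.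
  by rewrite /D subrK exprMn exprVn; field.
have U0 : (D + 1) ^+ 10 - 1 != 0.
  by apply: contra P20; rewrite -E => /eqP->; rewrite mulr0.
have Uv : vp ((D + 1) ^+ 10 - 1) = 1 by move: P2v; rewrite -E vpM // Wv add0r.
apply: notsmall => //.
apply/negP => D2.
have : smallz 2 ((D + 1) ^+ 10 - 1).
  have -> : (D + 1) ^+ 10 - 1 = D * 10%:R + D * (D * (45%:R + 120%:R * D + 210%:R * D ^+ 2
     + 252%:R * D ^+ 3 + 210%:R * D ^+ 4 + 120%:R * D ^+ 5 + 45%:R * D ^+ 6
     + 10%:R * D ^+ 7 + D ^+ 8)) by ring.
  have Di : int11 D by apply: smallzW D1.
  apply: smallzD; first by apply: smallzMr => //; int11.
  by apply: smallzMr => //; int11.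
by rewrite /smallz (negbTE U0) Uv.
Qed.

Local Notation D := (fun n => phi n / w n - 1).
Definition lterm m n := (-1) ^+ m.+1 * (phi n / w n - 1) ^+ m / m%:R.
Definition Lpart M n := \sum_(1 <= m < M.+1) lterm m n.
Local Notation L := (log11 (fun n => phi n / omega11 phi n)).

Lemma w_cauchy : cauchy w. Proof. by have [/cauchyE h _] := wspec. Qed.
Lemma wb_cauchy : cauchy wb. Proof. by have [/cauchyE h _] := wbspec. Qed.

Lemma D_cauchy : cauchy D.
Proof.
apply: cauchyB; last exact: cauchy_const.
apply: cauchyM; first exact: inZ11_cauchy.
apply: (@cauchyV _ 0); first exact: w_cauchy.
by apply: ev_mono ev_good => n [].
Qed.

Lemma lterm_bnd n m : good n -> (0 < m)%N ->
  smallz (m%:Z - (logn 11 m)%:Z) (lterm m n).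
Proof.
move=> g m0; have [d0 dv] := d_val g.
rewrite /lterm -mulrA; apply: smallzMl; first by int11.
have := smallzM (smallzX m (smallz_vp (phi n / w n - 1))) (smallzV m%:R).
by rewrite dv mul1r vp_nat.
Qed.

Lemma lterm_cauchy m : cauchy (lterm m).
Proof.
rewrite /lterm; apply: cauchyM; last exact: cauchy_const.
apply: cauchyM; first exact: cauchy_const.
exact: (cauchyX m D_cauchy).
Qed.

Lemma Lspec : is_cauchy L /\ pconv Lpart L.
Proof.
apply: plim_spec.
pose t m n := if m is 0 then 0 else lterm m n.
have [N hN] := ev_good.
have [y [hy hc]] : exists y, cauchy y /\ pconv (fun M n => \sum_(m < M) t m n) y.
  apply: (@series_lim t (fun m => m%:Z - (logn 11 m)%:Z) N).
  - by case=> [|m]; [exact: cauchy_const|exact: lterm_cauchy].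
  - by case=> [|m] n hn; [exact: smallz0|apply: lterm_bnd; [apply: hN|]].
  - by apply: g_lim.
exists y; split; first by apply/cauchyE.
apply: (pconv_ext _ (pconv_shift hc)) => M n.
rewrite big_ord_recl /Lpart big_add1 big_mkord /=.
by rewrite add0r.
Qed.

Lemma L_cauchy : cauchy L. Proof. by have [/cauchyE h _] := Lspec. Qed.

Lemma L_near : pdz 2 (fun n => L n - D n).
Proof.
have [_ hc] := Lspec; apply: (lim_approx (k := 2) hc).
have [N hN] := ev_good.
exists 1%N => M hM; exists N => n hn.
rewrite /Lpart big_ltn // {1}/lterm expr1 expr2 mulN1r opprK mul1r divr1.
rewrite addrC addKr big_nat_cond; apply: smallz_sum => m /andP[/andP[m2 _] _].
apply: smallzW (lterm_bnd (hN n hn) _); last by lia.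
case: (posnP (logn 11 m)) => [->|l0]; first by lia.
have := @logn_bnd m (ltnW m2) l0; lia.
Qed.

Lemma ev_good2 : ev (fun n => [/\ good n, L n != 0 & vp (L n) = 1]).
Proof.
move: (ev2 ev_good L_near); apply: ev_mono => n [g h].
have [d0 dv] := d_val g.
by have [] := smallz_eq (e := 1) (k := 2) isT h d0 dv.
Qed.

Lemma one_sub_sq (a : rat) : (1 - a) ^+ 2 - (1 - a) - 1 = a ^+ 2 - a - 1.
Proof. by ring. Qed.

Lemma fib_diff a j : int11 a -> smallz 1 (a ^+ 2 - a - 1) ->
  smallz 1 (a ^+ j - (1 - a) ^+ j - (fib j)%:R * (2 * a - 1)).
Proof.
move=> ha h; case: j => [|j]; first by rewrite !expr0 subrr mul0r subrr smallz0.
have h1 := fib_pow j ha h.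
have h' : smallz 1 ((1 - a) ^+ 2 - (1 - a) - 1) by rewrite one_sub_sq.
have h2 := @fib_pow (1 - a) j (int11B int11_1 ha) h'.
have -> : a ^+ j.+1 - (1 - a) ^+ j.+1 - (fib j.+1)%:R * (2 * a - 1) =
  (a ^+ j.+1 - (fib j.+1)%:R * a - (fib j)%:R) - ((1 - a) ^+ j.+1 - (fib j.+1)%:R * (1 - a) - (fib j)%:R)
  by ring.
exact: smallzB.
Qed.

Definition luc j := (if j is k.+1 then fib k.+1 + 2 * fib k else 2)%N.

Lemma fib_sum a j : int11 a -> smallz 1 (a ^+ 2 - a - 1) ->
  smallz 1 (a ^+ j + (1 - a) ^+ j - (luc j)%:R).
Proof.
move=> ha h; case: j => [|j]; first by rewrite !expr0 /= subrr smallz0.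
have h1 := fib_pow j ha h.
have h' : smallz 1 ((1 - a) ^+ 2 - (1 - a) - 1) by rewrite one_sub_sq.
have h2 := @fib_pow (1 - a) j (int11B int11_1 ha) h'.
have -> : a ^+ j.+1 + (1 - a) ^+ j.+1 - (luc j.+1)%:R =
  (a ^+ j.+1 - (fib j.+1)%:R * a - (fib j)%:R) + ((1 - a) ^+ j.+1 - (fib j.+1)%:R * (1 - a) - (fib j)%:R).
  by rewrite /luc natrD natrM; ring.
exact: smallzD.
Qed.

Variable i : nat.
Hypothesis hi9 : (i <= 9)%N.
Hypothesis hi5 : i <> 5%N.

Definition cf m n := (w n ^+ i - (-1) ^+ m * wb n ^+ i) * L n ^+ m / ((m`!)%:R * (2 * phi n - 1)).

Lemma Fi_term_eq x m n : Fi_term i m phi x n = cf m n * x n ^+ m.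
Proof. by []. Qed.

Lemma cf_bnd n m : good n -> L n != 0 -> vp (L n) = 1 ->
  smallz (m%:Z - (logn 11 m`!)%:Z) (cf m n).
Proof.
move=> g L0 Lv; have gs0 := g_s0 g; have gsv := g_sv g.
have f0 : (m`!)%:R != 0 :> rat by rewrite pnatr_eq0 -lt0n fact_gt0.
have hN : int11 (w n ^+ i - (-1) ^+ m * wb n ^+ i).
  have := g_wbint g; have := g_wv g; have := g_w0 g => w0 wv wbi.
  have wi : int11 (w n) by rewrite /int11 /smallz wv lexx orbT.
  by int11.
have := smallzM (smallzMl hN (smallzX m (smallz_vp (L n)))) (smallzV ((m`!)%:R * (2 * phi n - 1))).
by rewrite Lv mul1r vpM // gsv addr0 vp_nat.
Qed.

Lemma cf_cauchy m : cauchy (cf m).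
Proof.
rewrite /cf; apply: cauchyM; first apply: cauchyM.
- apply: cauchyB; first exact: cauchyX w_cauchy.
  by apply: cauchyM; [exact: cauchy_const|exact: cauchyX wb_cauchy].
- exact: cauchyX L_cauchy.
- apply: (@cauchyV _ (logn 11 m`!)%:Z).
    by apply: cauchyM; [exact: cauchy_const|apply: cauchyB; [apply: cauchyM; [exact: cauchy_const|exact: inZ11_cauchy]|exact: cauchy_const]].
  have f0 : (m`!)%:R != 0 :> rat by rewrite pnatr_eq0 -lt0n fact_gt0.
  apply: ev_mono ev_good => n g; have gs0 := g_s0 g; have gsv := g_sv g.
  by rewrite mulf_neq0 // vpM // gsv addr0 vp_nat.
Qed.

Lemma luc_unit : (luc i)%:R != 0 :> rat /\ vp (luc i)%:R = 0.
Proof.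
rewrite vp_nat pnatr_eq0.
by move: hi9 hi5; case: i => [|[|[|[|[|[|[|[|[|[|j]]]]]]]]]].
Qed.

Lemma cf1_val n : good n -> L n != 0 -> vp (L n) = 1 -> cf 1 n != 0 /\ vp (cf 1 n) = 1.
Proof.
move=> g L0 Lv; have gs0 := g_s0 g; have gsv := g_sv g.
have hp := g_phi g; have he := g_eq g.
have he1 : smallz 1 (phi n ^+ 2 - phi n - 1) by apply: smallzW he.
have [u0 uv] : w n ^+ i + wb n ^+ i != 0 /\ vp (w n ^+ i + wb n ^+ i) = 0.
  have [l0 lv] := luc_unit.
  apply: (@smallz_eq 0 1 _ _ isT _ l0 lv).
  have -> : w n ^+ i + wb n ^+ i - (luc i)%:R = (w n ^+ i - phi n ^+ i) +
     (wb n ^+ i - (1 - phi n) ^+ i) + (phi n ^+ i + (1 - phi n) ^+ i - (luc i)%:R) by ring.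
  have wi : int11 (w n) by rewrite /int11 /smallz (g_wv g) lexx orbT.
  have wbi := g_wbint g.
  apply: smallzD; last exact: fib_sum.
  apply: smallzD; apply: powdiff => //; try by int11.
  - exact: g_w1.
  - exact: g_wb1.
have E : cf 1 n = (w n ^+ i + wb n ^+ i) * L n * (2 * phi n - 1)^-1.
  by rewrite /cf expr1 mulN1r opprK expr1 [1`!]/= mul1r.
rewrite E; split; first by rewrite !mulf_neq0 ?invr_eq0.
by rewrite !vpM ?mulf_neq0 ?invr_eq0 // vpV gsv uv Lv.
Qed.

Lemma cf0_val n : good n -> smallz 1 (cf 0 n - (fib i %% 11)%:R).
Proof.
move=> g; have gs0 := g_s0 g; have gsv := g_sv g.
have hp := g_phi g; have he := g_eq g.
have he1 : smallz 1 (phi n ^+ 2 - phi n - 1) by apply: smallzW he.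
have wi : int11 (w n) by rewrite /int11 /smallz (g_wv g) lexx orbT.
have wbi := g_wbint g.
have h1 : smallz 1 ((cf 0 n - (fib i)%:R) * (2 * phi n - 1)).
  have -> : (cf 0 n - (fib i)%:R) * (2 * phi n - 1) = (w n ^+ i - phi n ^+ i) -
     (wb n ^+ i - (1 - phi n) ^+ i) + (phi n ^+ i - (1 - phi n) ^+ i - (fib i)%:R * (2 * phi n - 1)).
    by rewrite /cf expr0 mul1r /= mul1r; field.
  apply: smallzD; last exact: fib_diff.
  apply: smallzB; apply: powdiff => //; try by int11.
  - exact: g_w1.
  - exact: g_wb1.
have := smallz_div h1 gs0; rewrite gsv subr0 => h2.
have -> : cf 0 n - (fib i %% 11)%:R = (cf 0 n - (fib i)%:R) + 11 * (fib i %/ 11)%:R.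
  by rewrite {2}(divn_eq (fib i) 11) natrD natrM; ring.
by apply: smallzD => //; apply: smallz_11; int11.
Qed.

Lemma ev_good3 x : inZ11 x -> ev (fun n => [/\ good n, L n != 0, vp (L n) = 1 & int11 (x n)]).
Proof.
move=> hx; move: (ev2 ev_good2 (inZ11_int hx)); apply: ev_mono => n [[g l0 lv] h].
by split.
Qed.

Local Notation F := (Fi i phi).

Lemma F_exists x : inZ11 x -> exists y, is_cauchy y /\ pconv (Fi_partial i phi x) y.
Proof.
move=> hx; have [N hN] := ev_good3 hx.
have [y [hy hc]] : exists y, cauchy y /\ pconv (fun M n => \sum_(m < M) cf m n * x n ^+ m) y.
  apply: (@series_lim (fun m n => cf m n * x n ^+ m) (fun m => m%:Z - (logn 11 m`!)%:Z) N).
  - by move=> m; apply: cauchyM; [exact: cf_cauchy|exact: cauchyX (inZ11_cauchy hx)].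
  - move=> m n hn; have [g l0 lv xi] := hN n hn.
    by apply: smallzMr; [exact: cf_bnd|int11].
  - exact: gF_lim.
by exists y; split; [apply/cauchyE|].
Qed.

Lemma F_spec x : inZ11 x -> is_cauchy (F x) /\ pconv (Fi_partial i phi x) (F x).
Proof. by move=> hx; apply: plim_spec; apply: F_exists. Qed.

Lemma F_mod x : inZ11 x -> pdz 1 (fun n => F x n - (fib i %% 11)%:R).
Proof.
move=> hx; have [_ hc] := F_spec hx.
apply: (lim_approx (k := 1) hc).
have [N hN] := ev_good3 hx.
exists 1%N => M hM; exists N => n hn; have [g l0 lv xi] := hN n hn.
case: M hM => [//|M] _.
rewrite /Fi_partial big_ord_recl /= Fi_term_eq expr0 mulr1.
have -> : forall a b c : rat, a + b - c = (a - c) + b by move=> a b c; ring.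
apply: smallzD; first exact: cf0_val.
apply: smallz_sum => j _; rewrite Fi_term_eq; apply: smallzMr; last by int11.
apply: smallzW (cf_bnd _ g l0 lv); have := logn_fact_bnd (bump 0 j); rewrite /bump /=; lia.
Qed.

Lemma F_lip x x' (j : nat) : inZ11 x -> inZ11 x' -> pdz j%:Z (fun n => x n - x' n) ->
  pdz j.+2%:Z (fun n => F x n - F x' n - cf 1 n * (x n - x' n)).
Proof.
move=> hx hx' hj; have [_ hc] := F_spec hx; have [_ hc'] := F_spec hx'.
apply: (lim_approx (k := j.+2) (pconvB hc hc')).
have [N hN] := ev2 (ev_good3 hx) (ev2 (ev_good3 hx') hj).
exists 2%N => M hM; exists N => n hn.
have [[g l0 lv xi] [[_ _ _ xi'] hjn]] := hN n hn.
case: M hM => [//|[//|M]] _.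
rewrite /Fi_partial -sumrB !big_ord_recl /= !Fi_term_eq !expr0 !expr1 subrr.
change (bump 0 0) with 1%N.
set S := \sum_(_ < M) _.
have -> : 0 + (cf 1 n * x n - cf 1 n * x' n + S) - cf 1 n * (x n - x' n) = S by ring.
apply: smallz_sum => k _; rewrite !Fi_term_eq -mulrBr.
rewrite -[j.+2%:Z]/(2 + j%:Z); apply: smallzM; last by apply: powdiff.
apply: smallzW (cf_bnd _ g l0 lv); have := logn_fact_bnd (bump 0 (bump 0 k)); rewrite /bump /=; lia.
Qed.

Definition qstep (y x : padic) : padic := fun n => (y n - F x n) / cf 1 n.
Fixpoint newt (y : padic) (k : nat) : padic :=
  match k with 0 => pconst 0 | k'.+1 => (fun n => newt y k' n + qstep y (newt y k') n) end.

Lemma ev_cf1 : ev (fun n => cf 1 n != 0 /\ vp (cf 1 n) = 1).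
Proof. by apply: ev_mono ev_good2 => n [g l0 lv]; apply: cf1_val. Qed.

Lemma qstep_pdz y x (k : nat) : pdz k.+1%:Z (fun n => y n - F x n) -> pdz k%:Z (qstep y x).
Proof.
move=> h; move: (ev2 ev_cf1 h); apply: ev_mono => n [[c0 cv] hn].
rewrite /qstep; have := smallzM hn (smallzV (cf 1 n)); rewrite cv.
by apply: smallzW; lia.
Qed.

Lemma qstep_cauchy y x : inZ11 y -> inZ11 x -> cauchy (qstep y x).
Proof.
move=> hy hx; rewrite /qstep; apply: cauchyM.
  by apply: cauchyB; [exact: inZ11_cauchy|have [/cauchyE h _] := F_spec hx].
exact: (cauchyV (cf_cauchy 1) ev_cf1).
Qed.

Lemma newt_inv y : inZ11 y -> pdz 1 (fun n => y n - (fib i %% 11)%:R) ->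
  forall k, inZ11 (newt y k) /\ pdz k.+1%:Z (fun n => y n - F (newt y k) n).
Proof.
move=> hy hyc; elim=> [|k [hX hF]].
  have h0 : inZ11 (pconst 0).
    split. apply/cauchyE. exact: (cauchy_const 0). exact: (pdz0 0).
  split=> //; have := pdzB hyc (F_mod h0).
  by apply: pdz_ext; apply: ev_true => n /=; ring.
set X := newt y k.
have hq := qstep_pdz hF.
have hX' : inZ11 (newt y k.+1).
  split; first by apply/cauchyE; apply: cauchyD; [exact: inZ11_cauchy|exact: qstep_cauchy].
  by apply: pdzD; [exact: inZ11_int|apply: pdz_W hq].
split=> //.
have hd : pdz k%:Z (fun n => newt y k.+1 n - X n).
  by move: hq; apply: pdz_ext; apply: ev_true => n /=; rewrite /X; ring.
have hl := F_lip hX' hX hd.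
move: (ev2 ev_cf1 (pdzN hl)); rewrite /pdz; apply: ev_mono => n [[c0 _] hn].
have e : newt y k.+1 n = X n + qstep y X n by [].
have -> : y n - F (newt y k.+1) n = - (F (newt y k.+1) n - F X n - cf 1 n * (newt y k.+1 n - X n))
   + (y n - F X n - cf 1 n * qstep y X n) by rewrite e; ring.
have -> : y n - F X n - cf 1 n * qstep y X n = 0.
  by rewrite /qstep mulrC mulfVK // subrr.
by rewrite addr0.
Qed.

Lemma newt_diff y : inZ11 y -> pdz 1 (fun n => y n - (fib i %% 11)%:R) ->
  forall m m', (m <= m')%N -> pdz m%:Z (fun n => newt y m' n - newt y m n).
Proof.
move=> hy hyc m; elim=> [|m' IH].
  by rewrite leqn0 => /eqP->; apply: ev_true => n; rewrite subrr smallz0.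
rewrite leq_eqVlt => /orP[/eqP->|]; first by apply: ev_true => n; rewrite subrr smallz0.
rewrite ltnS => mm'; have h := IH mm'.
have [hX hF] := newt_inv hy hyc m'.
have hq : pdz m%:Z (qstep y (newt y m')).
  by apply: (pdz_W _ (qstep_pdz hF)); rewrite lez_nat.
apply: (pdz_ext _ (pdzD h hq)); apply: ev_true => n /=; ring.
Qed.

Lemma final y : inZ11 y -> pdz 1 (fun n => y n - (fib i %% 11)%:R) ->
  exists x, inZ11 x /\ peq (F x) y.
Proof.
move=> hy hyc.
have [x [hxc hxl]] : exists x, cauchy x /\ pconv (newt y) x.
  apply: complete; first by move=> m; have [[/cauchyE h _] _] := newt_inv hy hyc m.
  move=> k; exists k => m m' hm hm'.
  have [mm'|m'm] := leqP m m'.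
    have h1 : pdz k%:Z (fun n => - (newt y m' n - newt y m n)).
      by apply: (pdz_W _ (pdzN (newt_diff hy hyc mm'))); rewrite lez_nat.
    by apply: (pdz_ext _ h1); apply: ev_true => n /=; ring.
  by apply: (pdz_W _ (newt_diff hy hyc (ltnW m'm))); rewrite lez_nat.
have hx0 : pdz 0 x.
  have [M hM] := hxl 0%N.
  have h := pdzB (inZ11_int (proj1 (newt_inv hy hyc M))) (hM M (leqnn _)).
  by apply: (pdz_ext _ h); apply: ev_true => n /=; ring.
have hx : inZ11 x by split; [apply/cauchyE|].
exists x; split=> // k.
have hxk : pdz k%:Z (fun n => x n - newt y k n).
  by apply: (lim_approx hxl); exists k => m hm; apply: newt_diff.
have [hXk hFk] := newt_inv hy hyc k.
have hl := F_lip hx hXk hxk.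
have hc1 : pdz 1 (cf 1).
  by apply: ev_mono ev_cf1 => n [c0 cv]; rewrite /smallz cv lexx orbT.
have hm := pdzM hc1 hxk.
have h1 : pdz k%:Z (fun n => F x n - F (newt y k) n - cf 1 n * (x n - newt y k n)).
  by apply: (pdz_W _ hl); lia.
have h2 : pdz k%:Z (fun n => cf 1 n * (x n - newt y k n)).
  by apply: (pdz_W _ hm); lia.
have h3 : pdz k%:Z (fun n => y n - F (newt y k) n).
  by apply: (pdz_W _ hFk); lia.
apply: (pdz_ext _ (pdzB (pdzD h1 h2) h3)); apply: ev_true => n /=; ring.
Qed.

End Main.


Theorem lemma5p4 (i : nat) (phi : padic) :
  (i <= 9)%N -> i <> 5%N ->
  inZ11 phi -> peq (fun n => phi n ^+ 2 - phi n - 1) (pconst 0) ->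
  let c := pconst ((fib i %% 11)%N%:R) in
  (forall x, inZ11 x -> exists y, is_cauchy y /\ pconv (Fi_partial i phi x) y) /\
  (forall x, inZ11 x -> inZ11 (Fi i phi x) /\ pdvd 1 (fun n => Fi i phi x n - c n)) /\
  (forall y, inZ11 y -> pdvd 1 (fun n => y n - c n) ->
     exists x, inZ11 x /\ peq (Fi i phi x) y).
Proof.
move=> hi9 hi5 hphi heq c; split; [|split].
- by move=> x hx; apply: (F_exists hphi heq i hx).
- move=> x hx; have hm := F_mod hphi heq hi9 hi5 hx.
  split=> //; split; first by have [] := F_spec hphi heq i hx.
  have hc : pdz 0 (fun _ => ((fib i %% 11)%N%:R : rat)).
    by apply: ev_true => n; apply: int11_nat.
  by apply: (pdz_ext _ (pdzD (pdz_W _ hm) hc)) => //; apply: ev_true => n /=; rewrite subrK.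
- by move=> y hy hyc; apply: (final hphi heq hi9 hi5 hy hyc).
Qed.
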